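(* Fix a horizon $T<\infty$ and assume the prefix space $\mathcal{X}_{\le T+1}$ is finite, that $0<R_{\min}\le r(z)\le R_{\max}<\infty$ for all prefixes $z$, that $0<\alpha_t<1$ for all $t$, and that $\sum_{x'}p(x'\mid z)=1$ for every prefix $z$. Let $\beta_0,\beta_1,\dots,\beta_T\ge 0$ be fixed (deterministic) powers. Run PB-SMC with $N$ particles, and let $\mathcal{P}_t$, $W_t$ be its weighted pool at round $t$. Then for every fixed $t\le T$ and every bounded $f:\mathcal{X}_{\le T+1}\to\mathbb{R}$, $$\frac{\sum_{z\in\mathcal{P}_t}W_t(z)f(z)}{\sum_{z\in\mathcal{P}_t}W_t(z)}\xrightarrow[N\to\infty]{p}\mathbb{E}_{\pi_t^{(\beta_t)}}[f(X)].$$ Moreover, if instead the powers are computed adaptively by $\beta_{t+1}=\beta_t+\gamma\bigl(1-(\sigma_t-1/C_t)\bigr)$ (with $\gamma>0$, $C_t=|\mathcal{P}_t|$, $a_z=r(z)/\sum_{y\in\mathcal{P}_t}r(y)$ and $\sigma_t=\sum_{z\in\mathcal{P}_t}a_z^2$, sums over the multiset), then each $\beta_t$ converges in probability as $N\to\infty$ to a deterministic limit $\beta_t^*$, and the same convergence holds with target $\pi_t^{(\beta_t^* )}$.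
   Context: Let $x_0$ be a fixed prompt and let reasoning steps take values in some set. A prefix is a finite sequence $z=x_{1:d}=(x_1,\dots,x_d)$ with $d\ge1$; $\mathrm{len}(z)=d$. $\mathcal{X}_s$ is the set of prefixes of length exactly $s$ and $\mathcal{X}_{\le T+1}=\bigcup_{s=1}^{T+1}\mathcal{X}_s$. A language model gives a normalized next-step kernel $p(x_d\mid x_{1:d-1})$ (conditioning on $x_0$ suppressed) and prefix probability $p(x_{1:d})=\prod_{s=1}^d p(x_s\mid x_{1:s-1})$. The parent of $z=x_{1:d}$ is $\mathrm{pa}(z)=x_{1:d-1}$ if $d\ge2$ and $\mathrm{pa}(z)=x_0$ if $d=1$. $r$ is a positive score function on prefixes with the convention $r(x_0)=1$. Powered target: for $\beta\ge0$ and round $t$, $\widetilde\pi_t^{(\beta)}(z)=p(z)\,r(z)^{\beta}\,\mathbf{1}\{\mathrm{len}(z)\le t+1\}$ on $\mathcal{X}_{\le T+1}$, and $\pi_t^{(\beta)}=\widetilde\pi_t^{(\beta)}/\sum_{y}\widetilde\pi_t^{(\beta)}(y)$. Correction factor: for $t\ge1$, $$F_t(z)=\frac{\left(\frac{r(z)}{r(\mathrm{pa}(z))}\right)^{\beta_{t-1}}r(z)^{\beta_t-\beta_{t-1}}}{\alpha_t\mathbf{1}\{\mathrm{len}(z)\ge2\}+(1-\alpha_t)\left(\frac{r(z)}{r(\mathrm{pa}(z))}\right)^{\beta_{t-1}}\mathbf{1}\{\mathrm{len}(z)\le t\}}.$$ PB-SMC (Power Backtrack SMC): $\mathcal{P}_0$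 is a multiset of $N$ i.i.d. one-step samples $x_1\sim p(\cdot\mid x_0)$ with weights $W_0(z)=r(z)^{\beta_0}$. For $t=1,\dots,T$: (i) draw $N$ parents i.i.d. from $\mathcal{P}_{t-1}$ with probabilities proportional to $W_{t-1}$ and extend each parent $u$ by one step $x'\sim p(\cdot\mid u)$, giving the multiset $\mathcal{B}_t$ of $N$ new children; (ii) independently draw a multiset $S_t$ of $Nt$ elements i.i.d. from $\mathcal{P}_{t-1}$ with probabilities proportional to $W_{t-1}$ (no extension); (iii) set $\mathcal{P}_t=S_t\uplus\mathcal{B}_t$ with weights $W_t(z)=\alpha_tF_t(z)$ for $z\in\mathcal{B}_t$ and $W_t(z)=(1-\alpha_t)F_t(z)/t$ for $z\in S_t$. *)

(* Defs.v *)
From HB Require Import structures.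
From mathcomp Require Import all_boot all_order all_algebra.
From mathcomp Require Import all_classical all_reals all_analysis.
Set Implicit Arguments. Unset Strict Implicit. Unset Printing Implicit Defensive.
Import Order.TTheory GRing.Theory Num.Theory.
Import numFieldNormedType.Exports.
Local Open Scope classical_set_scope.
Local Open Scope ring_scope.

(* Finitely supported distributions (the law of a finite randomized    *)
(* program): a list of (probability, outcome) pairs.                   *)
Section FDist.
Variable R : realType.

Definition fdist (A : Type) := seq (R * A).

Definition fret (A : Type) (a : A) : fdist A := [:: (1, a)].

Definition fbind (A B : Type) (d : fdist A) (k : A -> fdist B) : fdist B :=
  flatten [seq [seq (pa.1 * qb.1, qb.2) | qb <- k pa.2] | pa <- d].

Definition fprob (A : Type) (d : fdist A) (E : A -> bool) : R :=
  \sum_(pa <- d | E pa.2) pa.1.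

(* k i.i.d. draws from d, collected in a sequence (a multiset) *)
Definition fiid (A : Type) (k : nat) (d : fdist A) : fdist (seq A) :=
  iter k (fun acc => fbind acc (fun l => fbind d (fun x => fret (x :: l))))
       (fret [::]).

Definition conv_prob (A : Type) (d : nat -> fdist A) (X : A -> R) (c : R) : Prop :=
  forall eps : R, 0 < eps ->
    (fun N : nat => fprob (d N) (fun a => eps < `|X a - c|)) @ \oo --> (0 : R).
End FDist.
Arguments fret {R A}.
Arguments fbind {R A B}.
Arguments fiid {R A}.

(* The model: steps in a finite type S; a prefix x_{1:d} is a sequence *)
(* [:: x_1; ...; x_d] (d >= 1); the empty sequence stands for x_0.     *)
(* p u x = p(x | u) ; r is the score on prefixes, r(x_0) := 1.         *)
Section PBSMC.
Variables (R : realType) (S : finType).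
Variable p : seq S -> S -> R.
Variable r : seq S -> R.

Definition rx (z : seq S) : R := if z is [::] then 1 else r z.

Definition pa (z : seq S) : seq S := take (size z).-1 z.

Fixpoint prefprob_aux (u rest : seq S) : R :=
  if rest is x :: rest' then p u x * prefprob_aux (rcons u x) rest' else 1.
Definition prefprob (z : seq S) : R := prefprob_aux [::] z.

(* E_{pi_t^(beta)}[f], the powered target on X_{<= T+1} *)
Definition piw (T t : nat) (beta : R) (g : seq S -> R) : R :=
  \sum_(s < T.+1)
    \sum_(x : (s.+1).-tuple S)
      (if (s.+1 <= t.+1)%N then prefprob x * rx x `^ beta * g x else 0).
Definition pi_expect (T t : nat) (beta : R) (f : seq S -> R) : R :=
  piw T t beta f / piw T t beta (fun _ => 1).

(* correction factor F_t(z) with b0 = beta_{t-1}, b1 = beta_t *)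
Definition Fcorr (alpha : nat -> R) (t : nat) (b0 b1 : R) (z : seq S) : R :=
  let ratio := rx z / rx (pa z) in
  (ratio `^ b0 * rx z `^ (b1 - b0)) /
  (alpha t * (if (2 <= size z)%N then 1 else 0)
   + (1 - alpha t) * ratio `^ b0 * (if (size z <= t)%N then 1 else 0)).

Definition pool := seq (seq S * R).

Definition resample (P : pool) : fdist R (seq S) :=
  [seq (zw.2 / \sum_(yw <- P) yw.2, zw.1) | zw <- P].

Definition extend (u : seq S) : fdist R (seq S) :=
  [seq (p u x, rcons u x) | x <- enum S].

Definition estimate (P : pool) (f : seq S -> R) : R :=
  (\sum_(zw <- P) zw.2 * f zw.1) / (\sum_(zw <- P) zw.2).

(* State after round t: (P_t with weights W_t, beta_t).  The schedule  *)
(* [next t P_t beta_t] produces beta_{t+1}.                             *)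
Variable alpha : nat -> R.
Variable next : nat -> pool -> R -> R.
Variable beta0 : R.

Definition pb_init (N : nat) : fdist R (pool * R) :=
  fbind (fiid N (extend [::])) (fun P0 =>
    fret ([seq (z, rx z `^ beta0) | z <- P0], beta0)).

Definition pb_step (N t : nat) (st : pool * R) : fdist R (pool * R) :=
  let P := st.1 in
  let b := st.2 in
  let b' := next t.-1 P b in
  fbind (fiid N (fbind (resample P) extend)) (fun B =>
  fbind (fiid (N * t) (resample P)) (fun Sel =>
  fret ([seq (z, (1 - alpha t) * Fcorr alpha t b b' z / t%:R) | z <- Sel]
        ++ [seq (z, alpha t * Fcorr alpha t b b' z) | z <- B], b'))).

Fixpoint pbsmc (N t : nat) : fdist R (pool * R) :=
  if t is t'.+1 then fbind (pbsmc N t') (pb_step N t) else pb_init N.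

End PBSMC.

Definition adaptive_next (R : realType) (S : finType) (r : seq S -> R)
    (gamma : R) (t : nat) (P : pool R S) (b : R) : R :=
  let tot := \sum_(zw <- P) r zw.1 in
  let sigma := \sum_(zw <- P) (r zw.1 / tot) ^+ 2 in
  b + gamma * (1 - (sigma - 1 / (size P)%:R)).

Definition fixed_next (R : realType) (S : finType) (betas : nat -> R)
    (t : nat) (P : pool R S) (b : R) : R := betas t.+1.

(* Main.v *)
Require Import Defs.
From HB Require Import structures.
From mathcomp Require Import all_boot all_order all_algebra.
From mathcomp Require Import all_classical all_reals all_analysis.
From mathcomp Require Import ring lra zify.
Import Order.TTheory GRing.Theory Num.Theory.
Import numFieldNormedType.Exports.
Local Open Scope classical_set_scope.
Local Open Scope ring_scope.
Set Implicit Arguments. Unset Strict Implicit. Unset Printing Implicit Defensive.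

Section Calc.
Variable R : realType.

Definition Ex {A : Type} (d : fdist R A) (X : A -> R) : R :=
  \sum_(pa <- d) pa.1 * X pa.2.

Fixpoint gd {A : Type} (P : A -> Prop) (d : fdist R A) : Prop :=
  if d is pa :: d' then (0 <= pa.1 /\ P pa.2) /\ gd P d' else True.

Definition mass {A : Type} (d : fdist R A) := Ex d (fun _ => 1).

Lemma Ex_nil A (X : A -> R) : Ex [::] X = 0.
Proof. by rewrite /Ex big_nil. Qed.

Lemma Ex_cons A (pa : R * A) d X : Ex (pa :: d) X = pa.1 * X pa.2 + Ex d X.
Proof. by rewrite /Ex big_cons. Qed.

Lemma Ex_cat A (d1 d2 : fdist R A) X : Ex (d1 ++ d2) X = Ex d1 X + Ex d2 X.
Proof. by rewrite /Ex big_cat. Qed.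

Lemma Ex_ret A (a : A) X : Ex (fret a) X = X a.
Proof. by rewrite /Ex /fret big_cons big_nil mul1r addr0. Qed.

Lemma Ex_map_scale A (c : R) (d : fdist R A) X :
  Ex [seq (c * qb.1, qb.2) | qb <- d] X = c * Ex d X.
Proof.
rewrite /Ex big_map mulr_sumr; apply: eq_bigr => qb _ /=; by rewrite mulrA.
Qed.

Lemma fbind_cons A B (pa : R * A) d (k : A -> fdist R B) :
  fbind (pa :: d) k = [seq (pa.1 * qb.1, qb.2) | qb <- k pa.2] ++ fbind d k.
Proof. by []. Qed.

Lemma Ex_bind A B (d : fdist R A) (k : A -> fdist R B) X :
  Ex (fbind d k) X = Ex d (fun a => Ex (k a) X).
Proof.
elim: d => [|pa d IH]; first by rewrite /fbind /= !Ex_nil.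
by rewrite fbind_cons Ex_cat Ex_map_scale IH Ex_cons.
Qed.

Lemma ExD A (d : fdist R A) X Y : Ex d (fun a => X a + Y a) = Ex d X + Ex d Y.
Proof. by rewrite /Ex -big_split; apply: eq_bigr => pa _; rewrite mulrDr. Qed.

Lemma ExZ A (d : fdist R A) c X : Ex d (fun a => c * X a) = c * Ex d X.
Proof. by rewrite /Ex mulr_sumr; apply: eq_bigr => pa _; rewrite mulrCA. Qed.

Lemma Ex_cst A (d : fdist R A) c : Ex d (fun _ => c) = c * mass d.
Proof. by rewrite -ExZ; apply: eq_bigr => pa _ ; rewrite mulr1. Qed.

Lemma ExB A (d : fdist R A) X Y : Ex d (fun a => X a - Y a) = Ex d X - Ex d Y.
Proof.
rewrite -[Ex d Y]mul1r -mulNr -ExZ -ExD; apply: eq_bigr => pa _.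
by rewrite mulN1r.
Qed.

Lemma Ex_ext A (d : fdist R A) X Y : (forall a, X a = Y a) -> Ex d X = Ex d Y.
Proof. by move=> H; apply: eq_bigr => pa _; rewrite H. Qed.

Lemma gd_impl A (P Q : A -> Prop) d : gd P d -> (forall a, P a -> Q a) -> gd Q d.
Proof.
elim: d => [//|pa d IH] /= [[H0 HP] Hd] HPQ; split; first by split=> //; apply: HPQ.
exact: IH.
Qed.

Lemma gd_cat A (P : A -> Prop) d1 d2 : gd P d1 -> gd P d2 -> gd P (d1 ++ d2).
Proof. by elim: d1 => [//|pa d IH] /= [H1 H2] H3; split=> //; apply: IH. Qed.

Lemma gd_ret A (P : A -> Prop) a : P a -> gd P (fret a).
Proof. by move=> Ha /=; split=> //; split=> //; rewrite ler01. Qed.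

Lemma gd_bind A B (P : A -> Prop) (Q : B -> Prop) d (k : A -> fdist R B) :
  gd P d -> (forall a, P a -> gd Q (k a)) -> gd Q (fbind d k).
Proof.
elim: d => [//|pa d IH] /= [[H0 HP] Hd] Hk; rewrite fbind_cons.
apply: gd_cat; last exact: IH.
move: (Hk _ HP); elim: (k pa.2) => [//|qb l IHl] /= [[H1 HQ] Hl].
by split; [split=> //; apply: mulr_ge0 | apply: IHl].
Qed.

Lemma Ex_ler A (P : A -> Prop) d (X Y : A -> R) :
  gd P d -> (forall a, P a -> X a <= Y a) -> Ex d X <= Ex d Y.
Proof.
elim: d => [|pa d IH] /=; first by rewrite !Ex_nil.
move=> [[H0 HP] Hd] HXY; rewrite !Ex_cons; apply: lerD; last exact: IH.
by apply: ler_wpM2l => //; apply: HXY.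
Qed.

Lemma Ex_ge0 A (P : A -> Prop) d (X : A -> R) :
  gd P d -> (forall a, P a -> 0 <= X a) -> 0 <= Ex d X.
Proof.
move=> Hd HX; have -> : 0 = Ex d (fun _ => 0) by rewrite Ex_cst mul0r.
exact: (Ex_ler Hd).
Qed.

Lemma fprobE A (d : fdist R A) (E : A -> bool) :
  fprob d E = Ex d (fun a => (E a)%:R).
Proof.
rewrite /fprob /Ex big_mkcond /=; apply: eq_bigr => pa _.
by case: (E pa.2); rewrite ?mulr1 ?mulr0.
Qed.

Lemma fprob_ler A (P : A -> Prop) d (E1 E2 : A -> bool) :
  gd P d -> (forall a, P a -> E1 a -> E2 a) -> fprob d E1 <= fprob d E2.
Proof.
move=> Hd H; rewrite !fprobE; apply: (Ex_ler Hd) => a Pa.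
by case E1a: (E1 a); rewrite ?(H a Pa E1a) ?ler01 //; case: (E2 a); rewrite ?ler01.
Qed.

Lemma fprob_ge0 A (P : A -> Prop) d (E : A -> bool) : gd P d -> 0 <= fprob d E.
Proof.
move=> Hd; rewrite fprobE; apply: (Ex_ge0 Hd) => a _; by case: (E a); rewrite ?ler01.
Qed.

Lemma fprob_U A (P : A -> Prop) d (E E1 E2 : A -> bool) :
  gd P d -> (forall a, P a -> E a -> E1 a || E2 a) ->
  fprob d E <= fprob d E1 + fprob d E2.
Proof.
move=> Hd H; rewrite !fprobE -ExD; apply: (Ex_ler Hd) => a Pa.
case Ea: (E a); last by case: (E1 a); case: (E2 a); rewrite /= ?addr0 ?add0r ?ler01 ?addr_ge0 ?ler01.
by move: (H a Pa Ea); case: (E1 a); case: (E2 a) => //= _; rewrite ?addr0 ?add0r ?lerDl ?ler01.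
Qed.

Lemma fprob_le_mass A (P : A -> Prop) d (E : A -> bool) : gd P d -> fprob d E <= mass d.
Proof.
move=> Hd; rewrite fprobE; apply: (Ex_ler Hd) => a _; by case: (E a); rewrite ?ler01.
Qed.

Lemma fprob_bind A B (d : fdist R A) (k : A -> fdist R B) E :
  fprob (fbind d k) E = Ex d (fun a => fprob (k a) E).
Proof. by rewrite fprobE Ex_bind; apply: Ex_ext => a; rewrite fprobE. Qed.

Lemma mass_bind A B (d : fdist R A) (k : A -> fdist R B) :
  mass (fbind d k) = Ex d (fun a => mass (k a)).
Proof. by rewrite /mass Ex_bind. Qed.

End Calc.

Section Iid.
Variable R : realType.

Fixpoint allp {A : Type} (P : A -> Prop) (l : seq A) : Prop :=
  if l is x :: l' then P x /\ allp P l' else True.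

Lemma fiidS A (d : fdist R A) n :
  fiid n.+1 d = fbind (fiid n d) (fun l => fbind d (fun x => fret (x :: l))).
Proof. by []. Qed.

Lemma gd_fiid A (P : A -> Prop) (d : fdist R A) n :
  gd P d -> gd (fun l => size l = n /\ allp P l) (fiid n d).
Proof.
move=> Hd; elim: n => [|n IH]; first by apply: gd_ret.
rewrite fiidS; apply: (gd_bind IH) => l [Hs Hl].
apply: (gd_bind Hd) => x Px; apply: gd_ret => /=; by rewrite Hs.
Qed.

Lemma mass_fiid A (d : fdist R A) n : mass d = 1 -> mass (fiid n d) = 1.
Proof.
move=> Hm; elim: n => [|n IH]; first by rewrite /mass Ex_ret.
rewrite fiidS mass_bind -IH; apply: Ex_ext => l.
by rewrite mass_bind -Hm; apply: Ex_ext => x; rewrite /mass Ex_ret.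
Qed.

Lemma var_fiid A (d : fdist R A) (h : A -> R) n : mass d = 1 ->
  Ex (fiid n d) (fun l => (\sum_(x <- l) h x - n%:R * Ex d h) ^+ 2) =
  n%:R * Ex d (fun x => (h x - Ex d h) ^+ 2).
Proof.
move=> Hm; set mu := Ex d h; set V := Ex d _.
elim: n => [|n IH]; first by rewrite Ex_ret big_nil mul0r subr0 expr0n /= mul0r.
rewrite fiidS Ex_bind.
have -> : Ex (fiid n d) (fun a => Ex (fbind d (fun x => fret (x :: a)))
      (fun l => (\sum_(x <- l) h x - n.+1%:R * mu) ^+ 2)) =
    Ex (fiid n d) (fun l => (\sum_(x <- l) h x - n%:R * mu) ^+ 2 + V).
  apply: Ex_ext => l; rewrite Ex_bind.
  have -> : Ex d (fun a => Ex (fret (a :: l)) (fun l0 => (\sum_(x <- l0) h x - n.+1%:R * mu) ^+ 2))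
     = Ex d (fun x => (\sum_(x <- l) h x - n%:R * mu) ^+ 2 * 1
          + (2 * (\sum_(x <- l) h x - n%:R * mu)) * (h x - mu) + (h x - mu) ^+ 2).
    apply: Ex_ext => x; rewrite Ex_ret big_cons -addn1 natrD.
    set s := \sum_(_ <- l) h _; ring.
  rewrite !ExD !ExZ Ex_cst Hm ExB Ex_cst Hm.
  by rewrite /V /mu !mulr1 subrr mulr0 addr0.
by rewrite ExD Ex_cst mass_fiid // IH mulr1 mulrSr mulrDl mul1r.
Qed.

Lemma var_le A (P : A -> Prop) (d : fdist R A) (h : A -> R) : gd P d -> mass d = 1 ->
  Ex d (fun x => (h x - Ex d h) ^+ 2) <= Ex d (fun x => h x ^+ 2).
Proof.
move=> Hd Hm.
have -> : Ex d (fun x => (h x - Ex d h) ^+ 2) =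
   Ex d (fun x => h x ^+ 2) - Ex d h ^+ 2.
  have -> : Ex d (fun x => (h x - Ex d h) ^+ 2) =
    Ex d (fun x => h x ^+ 2 + ((- (2 * Ex d h)) * h x + Ex d h ^+ 2)).
    by apply: Ex_ext => x; rewrite sqrrB; rewrite mulr2n mulrDl mulNr; ring.
  rewrite ExD ExD ExZ Ex_cst Hm; ring.
by rewrite lerBlDr lerDl sqr_ge0.
Qed.

Lemma markov2 A (P : A -> Prop) (d : fdist R A) (X : A -> R) (del : R) :
  gd P d -> 0 < del -> fprob d (fun a => del < `|X a|) <= Ex d (fun a => X a ^+ 2) / del ^+ 2.
Proof.
move=> Hd del0; rewrite fprobE -[_ / _]mulrC -ExZ; apply: (Ex_ler Hd) => a _.
case: ltrP => H /=; last by rewrite mulr_ge0 ?invr_ge0 ?sqr_ge0.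
rewrite /= mulrC ler_pdivlMr ?exprn_gt0 // mul1r.
rewrite -(ger0_norm (sqr_ge0 (X a))) normrX lerXn2r ?nnegrE ?normr_ge0 //.
  exact: ltW.
exact: ltW.
Qed.

Lemma cheb_fiid A (P : A -> Prop) (d : fdist R A) (h : A -> R) n (del : R) :
  gd P d -> mass d = 1 -> 0 < del ->
  fprob (fiid n d) (fun l => del < `|\sum_(x <- l) h x - n%:R * Ex d h|)
    <= n%:R * Ex d (fun x => h x ^+ 2) / del ^+ 2.
Proof.
move=> Hd Hm del0.
apply: le_trans; first exact: (markov2 _ (gd_fiid n Hd)).
rewrite var_fiid // ler_pM2r ?invr_gt0 ?exprn_gt0 //.
by rewrite ler_wpM2l // (var_le _ Hd).
Qed.

End Iid.

Section EpsDelta.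
Variable R : realType.

Definition cont2 (phi : R -> R -> R) (c1 c2 : R) :=
  forall e, 0 < e -> exists2 del, 0 < del & forall x y,
    `|x - c1| <= del -> `|y - c2| <= del -> `|phi x y - phi c1 c2| <= e.

Lemma cont2_add c1 c2 : cont2 (fun x y => x + y) c1 c2.
Proof.
move=> e e0; exists (e / 2); first by rewrite divr_gt0.
move=> x y H1 H2; have -> : x + y - (c1 + c2) = (x - c1) + (y - c2) by ring.
apply: le_trans; first exact: ler_normD.
by rewrite [e]splitr lerD.
Qed.

Lemma cont2_mul c1 c2 : cont2 (fun x y => x * y) c1 c2.
Proof.
move=> e e0; set K := `|c1| + `|c2| + 1.
have K0 : 0 < K by rewrite /K ltr_pwDr // addr_ge0.
exists (Num.min 1 (e / K)); first by rewrite lt_min ltr01 divr_gt0.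
move=> x y H1 H2.
have -> : x * y - c1 * c2 = (x - c1) * (y - c2) + c1 * (y - c2) + c2 * (x - c1) by ring.
have Hd1 : Num.min 1 (e / K) <= 1 by rewrite ge_min lexx.
have Hd2 : Num.min 1 (e / K) * K <= e by rewrite -ler_pdivlMr // ge_min lexx orbT.
set d := Num.min 1 (e / K) in H1 H2 Hd1 Hd2.
apply: le_trans (ler_normD _ _) _.
apply: le_trans (lerD (ler_normD _ _) (lexx _)) _.
rewrite !normrM.
have a0 := normr_ge0 (x - c1); have b0 := normr_ge0 (y - c2).
have h1 : `|x - c1| * `|y - c2| <= d by rewrite -[d]mulr1; apply: ler_pM => //; apply: le_trans Hd1.
have h2 : `|c1| * `|y - c2| <= `|c1| * d by apply: ler_wpM2l.
have h3 : `|c2| * `|x - c1| <= `|c2| * d by apply: ler_wpM2l.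
apply: le_trans Hd2.
have -> : d * K = d + `|c1| * d + `|c2| * d by rewrite /K; ring.
by apply: lerD => //; apply: lerD.
Qed.

Lemma cont2_inv c (c0 : c != 0) : cont2 (fun x _ => x^-1) c c.
Proof.
move=> e e0; have ac0 : 0 < `|c| by rewrite normr_gt0.
exists (Num.min (`|c| / 2) (e * `|c| ^+ 2 / 2)).
  by rewrite lt_min !divr_gt0 // mulr_gt0 // exprn_gt0.
move=> x y H1 _.
have Hd1 : Num.min (`|c| / 2) (e * `|c| ^+ 2 / 2) <= `|c| / 2 by rewrite ge_min lexx.
have Hd2 : Num.min (`|c| / 2) (e * `|c| ^+ 2 / 2) <= e * `|c| ^+ 2 / 2 by rewrite ge_min lexx orbT.
set d := Num.min _ _ in H1 Hd1 Hd2.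
have Hx : `|c| / 2 <= `|x|.
  have t1 : `|c| <= `|c - x| + `|x| by have := ler_normD (c - x) x; rewrite subrK.
  have t2 : `|c - x| <= `|c| / 2 by rewrite distrC; apply: le_trans Hd1.
  have t3 : `|c| = `|c| / 2 + `|c| / 2 by rewrite -splitr.
  rewrite t3 in t1; rewrite -(lerD2l (`|c| / 2)); apply: le_trans t1 _.
  by rewrite lerD2r.
have x0 : x != 0 by rewrite -normr_gt0; apply: lt_le_trans Hx; rewrite divr_gt0.
have -> : x^-1 - c^-1 = (c - x) / (x * c) by field; apply/andP; split.
rewrite normrM normrV ?unitfE ?mulf_neq0 // normrM.
rewrite ler_pdivrMr ?mulr_gt0 ?normr_gt0 //.
apply: le_trans (_ : `|c - x| <= e * `|c| ^+ 2 / 2) _.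
  by rewrite distrC; apply: le_trans Hd2.
have -> : e * `|c| ^+ 2 / 2 = e * (`|c| / 2 * `|c|) by rewrite expr2 -!mulrA; congr (_ * _); rewrite mulrC mulrA.
by apply: ler_wpM2l; [apply: ltW | apply: ler_wpM2r].
Qed.

Lemma cont2_fst (f : R -> R) c : {for c, continuous f} -> cont2 (fun x _ => f x) c c.
Proof.
move: f c => f c H e e0.
move: H => /cvgrPdist_lt /(_ e e0) Hn.
have [d /= d0 Hd] := (nbhs_ballP _ _).1 Hn.
exists (d / 2); first by rewrite divr_gt0.
move=> x y Hx _; rewrite distrC; apply: ltW; apply: Hd.
rewrite /ball /= distrC; apply: le_lt_trans Hx _.
by rewrite ltr_pdivrMr // ltr_pMr // ltr1n.
Qed.

End EpsDelta.

Section CPdef.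
Variable R : realType.
Definition CP {A : Type} (d : nat -> fdist R A) (X : A -> R) (c : R) :=
  forall eps, 0 < eps -> forall e, 0 < e -> exists M, forall N, (M <= N)%N ->
    fprob (d N) (fun a => eps < `|X a - c|) <= e.
End CPdef.

Section CPlemmas.
Variable R : realType.
Variables (A : Type) (d : nat -> fdist R A) (G : nat -> A -> Prop).
Hypothesis Hd : forall N, (1 <= N)%N -> gd (G N) (d N).

Lemma CP_ext (X Y : A -> R) c :
  (forall N a, (1 <= N)%N -> G N a -> X a = Y a) -> CP d X c -> CP d Y c.
Proof.
move=> HXY HX eps eps0 e e0; have [M HM] := HX eps eps0 e e0.
exists (maxn M 1) => N HN; have HN1 : (1 <= N)%N by apply: leq_trans HN; rewrite leq_maxr.
apply: le_trans (HM N _); last by apply: leq_trans HN; rewrite leq_maxl.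
by apply: (fprob_ler (Hd HN1)) => a Ga; rewrite (HXY N a HN1 Ga).
Qed.

Lemma CP_near (X : A -> R) c :
  (forall eps, 0 < eps -> exists M, forall N a, (M <= N)%N -> (1 <= N)%N -> G N a ->
     `|X a - c| <= eps) -> CP d X c.
Proof.
move=> H eps eps0 e e0; have [M HM] := H eps eps0.
exists (maxn M 1) => N HN; have HN1 : (1 <= N)%N by apply: leq_trans HN; rewrite leq_maxr.
have HNM : (M <= N)%N by apply: leq_trans HN; rewrite leq_maxl.
apply: le_trans (_ : fprob (d N) (fun _ => false) <= e).
  apply: (fprob_ler (Hd HN1)) => a Ga /=; by rewrite ltNge (HM N a).
by rewrite /fprob big_pred0 // ltW.
Qed.

Lemma CP_cst c : CP d (fun _ => c) c.
Proof. by apply: CP_near => eps eps0; exists 0%N => N a _ _ _; rewrite subrr normr0 ltW. Qed.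

Lemma CP_op2 (phi : R -> R -> R) (X Y : A -> R) c1 c2 :
  cont2 phi c1 c2 -> CP d X c1 -> CP d Y c2 ->
  CP d (fun a => phi (X a) (Y a)) (phi c1 c2).
Proof.
move=> Hphi HX HY eps eps0 e e0.
have [del del0 Hdel] := Hphi eps eps0.
have e20 : 0 < e / 2 by rewrite divr_gt0.
have [M1 HM1] := HX del del0 _ e20; have [M2 HM2] := HY del del0 _ e20.
exists (maxn (maxn M1 M2) 1) => N HN.
have HN1 : (1 <= N)%N by apply: leq_trans HN; rewrite leq_maxr.
have HN' : (maxn M1 M2 <= N)%N by apply: leq_trans HN; rewrite leq_maxl.
rewrite geq_max in HN'; case/andP: HN' => H1 H2.
apply: le_trans (fprob_U (E1 := fun a => del < `|X a - c1|) (E2 := fun a => del < `|Y a - c2|) (Hd HN1) _) _.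
  move=> a _ /=; apply: contraLR; rewrite negb_or -!leNgt => /andP[h1 h2].
  exact: Hdel.
by rewrite [e]splitr lerD // ?HM1 ?HM2.
Qed.

Lemma CP_op1 (phi : R -> R) (X : A -> R) c :
  cont2 (fun x _ => phi x) c c -> CP d X c -> CP d (fun a => phi (X a)) (phi c).
Proof. by move=> Hphi HX; apply: (CP_op2 (phi := fun x _ => phi x) Hphi HX HX). Qed.

Lemma CP_add (X Y : A -> R) c1 c2 : CP d X c1 -> CP d Y c2 ->
  CP d (fun a => X a + Y a) (c1 + c2).
Proof. by move=> HX HY; apply: (CP_op2 (phi := fun x y => x + y)) => //; apply: cont2_add. Qed.

Lemma CP_mul (X Y : A -> R) c1 c2 : CP d X c1 -> CP d Y c2 ->
  CP d (fun a => X a * Y a) (c1 * c2).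
Proof. by move=> HX HY; apply: (CP_op2 (phi := fun x y => x * y)) => //; apply: cont2_mul. Qed.

Lemma CP_scale (X : A -> R) k c : CP d X c -> CP d (fun a => k * X a) (k * c).
Proof. by move=> HX; apply: CP_mul => //; apply: CP_cst. Qed.

Lemma CP_sub (X Y : A -> R) c1 c2 : CP d X c1 -> CP d Y c2 ->
  CP d (fun a => X a - Y a) (c1 - c2).
Proof.
move=> HX HY; have := CP_add HX (CP_scale (-1) HY).
rewrite mulN1r => H; by apply: CP_ext H => N a _ _; rewrite mulN1r.
Qed.

Lemma CP_inv (X : A -> R) c : c != 0 -> CP d X c -> CP d (fun a => (X a)^-1) c^-1.
Proof. by move=> c0 HX; apply: (CP_op1 (phi := fun x => x^-1)) => //; apply: cont2_inv. Qed.

Lemma CP_div (X Y : A -> R) c1 c2 : c2 != 0 -> CP d X c1 -> CP d Y c2 ->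
  CP d (fun a => X a / Y a) (c1 / c2).
Proof. by move=> c0 HX HY; apply: CP_mul => //; apply: CP_inv. Qed.

Lemma CP_cont (f : R -> R) (X : A -> R) c : {for c, continuous f} -> CP d X c ->
  CP d (fun a => f (X a)) (f c).
Proof. by move=> Hf HX; apply: CP_op1 => //; apply: cont2_fst. Qed.

Lemma CP_powR (X : A -> R) c (x : R) : 0 < x -> CP d X c ->
  CP d (fun a => x `^ X a) (x `^ c).
Proof.
move=> x0 HX.
have H1 : CP d (fun a => expR (X a * ln x)) (expR (c * ln x)).
  apply: (CP_cont (f := expR) (X := fun a => X a * ln x) (c := c * ln x)).
    exact: (@continuous_expR R (c * ln x)).
  exact: (CP_mul HX (CP_cst (ln x))).

have -> : x `^ c = expR (c * ln x) by rewrite /powR gt_eqF.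
by apply: CP_ext H1 => N a _ _; rewrite /powR gt_eqF.
Qed.

Lemma CP_sum (I : Type) (s : seq I) (X : I -> A -> R) (c : I -> R) :
  (forall i, CP d (X i) (c i)) ->
  CP d (fun a => \sum_(i <- s) X i a) (\sum_(i <- s) c i).
Proof.
move=> H; elim: s => [|i s IH].
  by rewrite big_nil; apply: CP_ext (CP_cst 0) => N a _ _; rewrite big_nil.
rewrite big_cons; apply: CP_ext (CP_add (H i) IH) => N a _ _; by rewrite big_cons.
Qed.

Lemma CP_approx (X Y Z : A -> R) c : CP d X c -> CP d Z 0 ->
  (forall N a, (1 <= N)%N -> G N a -> `|Y a - X a| <= Z a) -> CP d Y c.
Proof.
move=> HX HZ HYZ eps eps0 e e0.
have e20 : 0 < e / 2 by rewrite divr_gt0.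
have eps20 : 0 < eps / 2 by rewrite divr_gt0.
have [M1 HM1] := HX _ eps20 _ e20; have [M2 HM2] := HZ _ eps20 _ e20.
exists (maxn (maxn M1 M2) 1) => N HN.
have HN1 : (1 <= N)%N by apply: leq_trans HN; rewrite leq_maxr.
have HN' : (maxn M1 M2 <= N)%N by apply: leq_trans HN; rewrite leq_maxl.
rewrite geq_max in HN'; case/andP: HN' => H1 H2.
apply: le_trans (fprob_U (E1 := fun a => eps / 2 < `|X a - c|) (E2 := fun a => eps / 2 < `|Z a - 0|) (Hd HN1) _) _.
  move=> a Ga /=; apply: contraLR; rewrite negb_or -!leNgt subr0 => /andP[h1 h2].
  have h3 := HYZ N a HN1 Ga.
  have -> : Y a - c = (Y a - X a) + (X a - c) by rewrite addrA subrK.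
  apply: le_trans (ler_normD _ _) _; rewrite [eps]splitr lerD //.
  by apply: le_trans h3 _; apply: le_trans (ler_norm _) h2.
by rewrite [e]splitr lerD // ?HM1 ?HM2.
Qed.

End CPlemmas.

Section Bind.
Variable R : realType.

Lemma small_eventually (K e : R) : 0 < e ->
  exists M, forall N, (M <= N)%N -> (1 <= N)%N -> K / N%:R <= e.
Proof.
move=> e0; exists (Num.truncn (K / e)).+1 => N HN HN1.
have N0 : 0 < N%:R :> R by rewrite ltr0n.
rewrite ler_pdivrMr // -ler_pdivrMl // ltW //.
apply: lt_le_trans (truncnS_gt _) _; by rewrite ler_nat mulrC.
Qed.

Lemma CP_bind (A B : Type) (d : nat -> fdist R A) (G : nat -> A -> Prop)
  (k : nat -> A -> fdist R B) (Y : B -> R) (Gf : A -> R) (c : R) :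
  (forall N, (1 <= N)%N -> gd (G N) (d N)) ->
  (forall N, (1 <= N)%N -> mass (d N) = 1) ->
  (forall N a, (1 <= N)%N -> G N a -> gd (fun _ => True) (k N a) /\ mass (k N a) = 1) ->
  CP d Gf c ->
  (forall eps, 0 < eps -> exists C : A -> R, exists Cs : R, CP d C Cs /\
      forall N a, (1 <= N)%N -> G N a ->
        fprob (k N a) (fun y => eps < `|Y y - Gf a|) <= C a / N%:R) ->
  CP (fun N => fbind (d N) (k N)) Y c.
Proof.
move=> Hd Hm Hk HG HC eps eps0 e e0.
have eps20 : 0 < eps / 2 by rewrite divr_gt0.
have e30 : 0 < e / 3 by rewrite divr_gt0.
have [C [Cs [HCs HCb]]] := HC _ eps20.
have [M1 HM1] := HG _ eps20 _ e30.
have [M2 HM2] := HCs _ ltr01 _ e30.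
have [M3 HM3] := small_eventually (`|Cs| + 1) e30.
exists (maxn (maxn M1 M2) (maxn M3 1)) => N HN.
rewrite !geq_max in HN; case/andP: HN => /andP[H1 H2] /andP[H3 H4].
rewrite fprob_bind.
have Hpt : forall a, G N a -> fprob (k N a) (fun y => eps < `|Y y - c|) <=
   ((eps / 2 < `|Gf a - c|)%R)%:R + ((1 < `|C a - Cs|)%R)%:R + (`|Cs| + 1) / N%:R.
  move=> a Ga.
  have [Hk1 Hk2] := Hk N a H4 Ga.
  have hm : forall E, fprob (k N a) E <= 1 by move=> E; rewrite -Hk2; apply: fprob_le_mass Hk1.
  have nn1 : 0 <= (((1 < `|C a - Cs|)%R)%:R : R) by case: (_ < _); rewrite ?ler01.
  have nn3 : 0 <= (`|Cs| + 1) / N%:R :> R by rewrite divr_ge0 ?ler0n // addr_ge0.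
  case: ltrP => hG /=.
    apply: le_trans (hm _) _; rewrite -addrA lerDl; exact: addr_ge0.
  rewrite add0r.
  case: ltrP => hC /=.
    apply: le_trans (hm _) _; by rewrite lerDl.
  rewrite add0r.
  have Hsub : fprob (k N a) (fun y => eps < `|Y y - c|) <= fprob (k N a) (fun y => eps / 2 < `|Y y - Gf a|).
    apply: (fprob_ler Hk1) => y _; apply: contraLR; rewrite -!leNgt => hY.
    have -> : Y y - c = (Y y - Gf a) + (Gf a - c) by rewrite addrA subrK.
    apply: le_trans (ler_normD _ _) _; by rewrite [eps]splitr lerD.
  apply: le_trans Hsub _.
  apply: le_trans (HCb N a H4 Ga) _.
  rewrite ler_pM2r ?invr_gt0 ?ltr0n //.
  have -> : C a = (C a - Cs) + Cs by rewrite subrK.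
  rewrite addrC; apply: lerD; first exact: ler_norm.
  exact: le_trans (ler_norm _) hC.
apply: le_trans (Ex_ler (Hd N H4) Hpt) _.
rewrite !ExD !Ex_cst Hm // mulr1 -!fprobE.
rewrite [e](_ : e = e / 3 + e / 3 + e / 3); last by field.
by rewrite !lerD // ?HM1 ?HM2 ?HM3.
Qed.
End Bind.

Section Model.
Variables (R : realType) (S : finType) (T : nat)
    (p : seq S -> S -> R) (r : seq S -> R) (Rmin Rmax : R) (alpha : nat -> R).
Hypothesis p_ge0 : forall (u : seq S) (x : S), 0 <= p u x.
Hypothesis p_norm : forall u : seq S, \sum_(x : S) p u x = 1.
Hypothesis Rmin_gt0 : 0 < Rmin.
Hypothesis r_bnd : forall z : seq S, (1 <= size z <= T.+1)%N -> Rmin <= r z <= Rmax.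
Hypothesis alpha_bnd : forall t : nat, 0 < alpha t < 1.

Local Notation rx := (rx r).
Local Notation pp := (prefprob p).
Local Notation Fc := (Fcorr r alpha).

Lemma r_pos z : (1 <= size z <= T.+1)%N -> 0 < r z.
Proof. by move=> H; have /andP[h _] := r_bnd H; apply: lt_le_trans h. Qed.

Lemma rx_pos z : (size z <= T.+1)%N -> 0 < rx z.
Proof.
case: z => [|x z] H /=; first exact: ltr01.
by apply: r_pos; rewrite /= H.
Qed.

Lemma size_pa (z : seq S) : size (pa z) = (size z).-1.
Proof. by rewrite /pa size_take; case: z => //= x z; rewrite ltnSn. Qed.

Lemma pa_rcons (x : seq S) y : pa (rcons x y) = x.
Proof. by rewrite /pa size_rcons /= -cats1 take_size_cat. Qed.

Lemma rxpa_pos z : (size z <= T.+2)%N -> 0 < rx (pa z).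
Proof. by move=> H; apply: rx_pos; rewrite size_pa; case: (size z) H. Qed.

Lemma alpha_gt0 t : 0 < alpha t. Proof. by case/andP: (alpha_bnd t). Qed.
Lemma alpha_lt1 t : 0 < 1 - alpha t. Proof. by case/andP: (alpha_bnd t) => _; rewrite subr_gt0. Qed.

Lemma prefprob_aux_rcons u l y :
  prefprob_aux p u (rcons l y) = prefprob_aux p u l * p (u ++ l) y.
Proof.
elim: l u => [|x l IH] u /=; first by rewrite mulr1 mul1r cats0.
by rewrite IH mulrA cat_rcons.
Qed.

Lemma pp_rcons l y : pp (rcons l y) = pp l * p l y.
Proof. by rewrite /prefprob prefprob_aux_rcons. Qed.

Lemma pp_ge0 z : 0 <= pp z.
Proof.
rewrite /prefprob; elim: z [::] => [|x z IH] u /=; first exact: ler01.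
by apply: mulr_ge0.
Qed.

Definition Fden t b z := alpha t * (if (2 <= size z)%N then 1 else 0)
   + (1 - alpha t) * (rx z / rx (pa z)) `^ b * (if (size z <= t)%N then 1 else 0).

Lemma Fden_pos t b z : (1 <= t)%N -> (1 <= size z)%N -> 0 < Fden t b z.
Proof.
move=> t1 z1; rewrite /Fden.
case: ifP => H2.
  rewrite mulr1; apply: ltr_pwDl; first exact: alpha_gt0.
  by apply: mulr_ge0; [apply: mulr_ge0; [apply: ltW; apply: alpha_lt1|apply: powR_ge0]|case: ifP; rewrite ?ler01 ?lexx].
have -> : (size z <= t)%N by move: H2 z1; case: (size z) => [|[|n]] //= _ _.
rewrite mulr0 add0r mulr1; apply: mulr_gt0; first exact: alpha_lt1.
apply: powR_gt0.
case: z z1 H2 => [//|x [|y z]] //= _ _.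
by rewrite /pa /= divr1; apply: r_pos.
Qed.

Lemma FcE t b0 b1 z : Fc t b0 b1 z =
  ((rx z / rx (pa z)) `^ b0 * rx z `^ (b1 - b0)) / Fden t b0 z.
Proof. by rewrite /Fcorr /Fden. Qed.

Lemma Fc_pos t b0 b1 z : (1 <= t)%N -> (1 <= size z <= T.+1)%N -> 0 < Fc t b0 b1 z.
Proof.
move=> t1 /andP[z1 z2]; rewrite FcE; apply: divr_gt0; last exact: Fden_pos.
apply: mulr_gt0; apply: powR_gt0; last exact: rx_pos.
by apply: divr_gt0; [apply: rx_pos|apply: rxpa_pos; apply: leq_trans z2 _].
Qed.


Definition inr m (z : seq S) := (1 <= size z <= m)%N.
Definition goodpool m (P : pool R S) := all (fun zw => inr m zw.1 && (0 < zw.2)) P.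
Definition tot (P : pool R S) := \sum_(zw <- P) zw.2.

Lemma goodpool_cat m (P1 P2 : pool R S) : goodpool m (P1 ++ P2) = goodpool m P1 && goodpool m P2.
Proof. by rewrite /goodpool all_cat. Qed.

Lemma goodpool_mono m1 m2 (P : pool R S) : (m1 <= m2)%N -> goodpool m1 P -> goodpool m2 P.
Proof.
move=> H; apply: sub_all => zw /andP[/andP[h1 h2] h3]; rewrite /inr h1 h3 /= andbT.
exact: leq_trans h2 H.
Qed.

Lemma tot_ge0 m (P : pool R S) : goodpool m P -> 0 <= tot P.
Proof.
move=> HP; rewrite /tot big_seq; apply: sumr_ge0 => zw Hzw.
by move/allP: HP => /(_ zw Hzw) /andP[_ /ltW].
Qed.

Lemma tot_pos m (P : pool R S) : goodpool m P -> P != [::] -> 0 < tot P.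
Proof.
case: P => [//|zw P] /= /andP[/andP[_ h0] HP] _.
by rewrite /tot big_cons; apply: ltr_pwDl => //; apply: (tot_ge0 HP).
Qed.

Lemma Ex_resample (P : pool R S) (h : seq S -> R) : Ex (resample P) h = estimate P h.
Proof.
rewrite /Ex /resample /estimate big_map mulr_suml; apply: eq_bigr => zw _ /=.
by rewrite mulrAC.
Qed.

Lemma mass_resample m (P : pool R S) : goodpool m P -> P != [::] -> mass (resample P) = 1.
Proof.
move=> HP HP0; rewrite /mass Ex_resample /estimate.
have -> : \sum_(zw <- P) zw.2 * 1 = tot P by apply: eq_bigr => zw _; rewrite mulr1.
by rewrite divff // gt_eqF // (tot_pos HP).
Qed.

Lemma gd_resample m (P : pool R S) : goodpool m P -> gd (inr m) (resample P).
Proof.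
move=> HP; rewrite /resample; have : 0 <= \sum_(yw <- P) yw.2 := tot_ge0 HP.
move: (\sum_(yw <- P) yw.2) => t0 Ht0.
elim: P HP => [//|zw P IH] /= /andP[/andP[h1 h2] HP].
split; last exact: IH.
by split=> //; apply: divr_ge0 => //; apply: ltW.
Qed.

Lemma Ex_extend (u : seq S) (h : seq S -> R) : Ex (extend p u) h = \sum_(x : S) p u x * h (rcons u x).
Proof. by rewrite /Ex /extend big_map big_enum /=; apply: eq_bigl => x; rewrite inE. Qed.

Lemma mass_extend (u : seq S) : mass (extend p u) = 1.
Proof. by rewrite /mass Ex_extend -[RHS](p_norm u); apply: eq_bigr => x _; rewrite mulr1. Qed.

Lemma gd_extend (u : seq S) : gd (fun z => size z = (size u).+1) (extend p u).
Proof.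
rewrite /extend; elim: (enum S) => [//|x l IH] /=; split=> //.
by split; [apply: p_ge0 | rewrite size_rcons].
Qed.

Definition BS m (h : seq S -> R) := \sum_(s < m) \sum_(x : (s.+1).-tuple S) `|h x|.

Lemma BS_ge0 m (h : seq S -> R) : 0 <= BS m h.
Proof. by apply: sumr_ge0 => s _; apply: sumr_ge0 => x _. Qed.

Lemma le_BS m (h : seq S -> R) (z : seq S) : inr m z -> `|h z| <= BS m h.
Proof.
case/andP => z1 zm.
have Hs : ((size z).-1 < m)%N by case: (size z) z1 zm.
rewrite /BS (bigD1 (Ordinal Hs)) //=.
have Hz : size z == ((size z).-1).+1 by case: (size z) z1.
rewrite (bigD1 (Tuple Hz)) //= -addrA lerDl.
apply: addr_ge0; first by apply: sumr_ge0 => x _.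
by apply: sumr_ge0 => s _; apply: sumr_ge0 => x _.
Qed.

Lemma Ex_norm_le A (P : A -> Prop) (d : fdist R A) (X : A -> R) :
  gd P d -> `|Ex d X| <= Ex d (fun a => `|X a|).
Proof.
elim: d => [|pa d IH] /=; first by rewrite !Ex_nil normr0.
move=> [[h0 _] Hd]; rewrite !Ex_cons; apply: le_trans (ler_normD _ _) _.
by rewrite normrM (ger0_norm h0) lerD // IH.
Qed.

Lemma est_le_BS m (P : pool R S) (h : seq S -> R) : goodpool m P -> P != [::] -> `|estimate P h| <= BS m h.
Proof.
move=> HP HP0; rewrite -Ex_resample.
apply: le_trans (Ex_norm_le _ (gd_resample HP)) _.
apply: le_trans (Ex_ler (gd_resample HP) (Y := fun _ => BS m h) _) _.
  by move=> z Hz; apply: le_BS.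
by rewrite Ex_cst (mass_resample HP HP0) mulr1.
Qed.


Definition tsum n (F : seq S -> R) := \sum_(x : n.-tuple S) F x.

Lemma tsum0 (F : seq S -> R) : tsum 0 F = F [::].
Proof. by rewrite /tsum (big_pred1 [tuple]) // => x; apply/esym/eqP; exact: tuple0. Qed.

Lemma tsum_cons n (F : seq S -> R) : tsum n.+1 F = \sum_(y : S) tsum n (fun x => F (y :: x)).
Proof.
rewrite /tsum pair_big /=.
rewrite (reindex (fun q : S * n.-tuple S => [tuple of q.1 :: q.2])) /=.
  by apply: eq_bigr => -[y x] _.
exists (fun z : n.+1.-tuple S => (thead z, [tuple of behead z])).
  by move=> [y x] _ /=; rewrite theadE; congr pair; apply: val_inj.
by move=> z _; rewrite [RHS]tuple_eta.
Qed.

Lemma tsum_rcons n (F : seq S -> R) : tsum n.+1 F = tsum n (fun x => \sum_(y : S) F (rcons x y)).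
Proof.
elim: n F => [|n IH] F.
  by rewrite tsum_cons tsum0; apply: eq_bigr => y _; rewrite tsum0.
rewrite tsum_cons [RHS]tsum_cons; apply: eq_bigr => a _.
by rewrite IH.
Qed.

Lemma tsum_ext n (F G : seq S -> R) : (forall x : n.-tuple S, F x = G x) -> tsum n F = tsum n G.
Proof. by move=> H; apply: eq_bigr => x _; apply: H. Qed.

Lemma tsumD n (F G : seq S -> R) : tsum n (fun x => F x + G x) = tsum n F + tsum n G.
Proof. by rewrite /tsum big_split. Qed.

Lemma tsum_ge0 n (F : seq S -> R) : (forall x : n.-tuple S, 0 <= F x) -> 0 <= tsum n F.
Proof. by move=> H; apply: sumr_ge0 => x _. Qed.

Lemma piwE t b (f : seq S -> R) : piw p r T t b f =
  \sum_(s < T.+1) tsum s.+1 (fun x => if (s.+1 <= t.+1)%N then pp x * rx x `^ b * f x else 0).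
Proof. by []. Qed.

Lemma piwZ t b c (f : seq S -> R) : piw p r T t b (fun z => c * f z) = c * piw p r T t b f.
Proof.
rewrite !piwE mulr_sumr; apply: eq_bigr => s _; rewrite /tsum mulr_sumr.
by apply: eq_bigr => x _; case: ifP; rewrite ?mulr0 // mulrCA mulrA.
Qed.

Lemma piwD t b (f g : seq S -> R) : piw p r T t b (fun z => f z + g z) = piw p r T t b f + piw p r T t b g.
Proof.
rewrite !piwE -big_split; apply: eq_bigr => s _ /=. rewrite -tsumD; apply: tsum_ext => x.
by case: ifP; rewrite ?addr0 // mulrDr.
Qed.

Lemma piw_ext t b (f g : seq S -> R) : (forall z, f z = g z) -> piw p r T t b f = piw p r T t b g.
Proof. by move=> H; rewrite !piwE; apply: eq_bigr => s _; apply: tsum_ext => x; rewrite H. Qed.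

Lemma pp1 y : pp [:: y] = p [::] y.
Proof. by rewrite /prefprob /= mulr1. Qed.

Lemma piw0_term t b (f : seq S -> R) : tsum 1 (fun x => if (1 <= t.+1)%N then pp x * rx x `^ b * f x else 0)
  = \sum_(y : S) p [::] y * (rx [:: y] `^ b * f [:: y]).
Proof. by rewrite tsum_cons; apply: eq_bigr => y _; rewrite tsum0 /= pp1 mulrA. Qed.

Lemma piw1_pos t b : 0 < piw p r T t b (fun _ => 1).
Proof.
rewrite piwE big_ord_recl /= (piw0_term t).
apply: ltr_pwDl.
  have [y Hy] : exists y, 0 < p [::] y.
    case: (pickP (fun y => 0 < p [::] y)) => [y Hy|H]; first by exists y.
    have : \sum_(x : S) p [::] x <= 0.
      by apply: sumr_le0 => x _; move: (H x) => /= /negbT; rewrite -leNgt.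
    by rewrite p_norm ler10.
  rewrite (bigD1 y) //=; apply: ltr_pwDl.
    by apply: mulr_gt0 => //; rewrite mulr1; apply: powR_gt0; apply: r_pos.
  by apply: sumr_ge0 => x _; apply: mulr_ge0 => //; rewrite mulr1 powR_ge0.
apply: sumr_ge0 => s _; apply: tsum_ge0 => x; case: ifP => _ //.
by rewrite mulr1 mulr_ge0 // ?pp_ge0 // powR_ge0.
Qed.


Lemma sum_shift (A B C : nat -> R) : B T = 0 -> A 0%N = C 0%N ->
  (forall s, (s < T)%N -> A s.+1 + B s = C s.+1) ->
  \sum_(s < T.+1) A s + \sum_(s < T.+1) B s = \sum_(s < T.+1) C s.
Proof.
move=> HB H0 HS.
rewrite -!(big_mkord xpredT) big_nat_recl // big_nat_recr //= HB addr0 big_nat_recl //= H0.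
rewrite -addrA -big_split /=; congr (_ + _).
by apply: eq_big_nat => s /andP[_ Hs]; apply: HS.
Qed.

Lemma tsum_zero n (F : seq S -> R) : (forall x : n.-tuple S, F x = 0) -> tsum n F = 0.
Proof. by move=> H; rewrite /tsum big1 // => x _; apply: H. Qed.

Lemma rx_rcons (x : seq S) y : rx (rcons x y) = r (rcons x y).
Proof. by case: x. Qed.

Lemma rx_tuple n (x : n.+1.-tuple S) : rx x = r x.
Proof. by case: x => -[|a l]. Qed.

Lemma step_identity t' b0 b1 (h : seq S -> R) : (t' < T)%N ->
  t'.+1%:R * piw p r T t' b0 (fun z => (1 - alpha t'.+1) * Fc t'.+1 b0 b1 z / t'.+1%:R * h z)
  + piw p r T t' b0 (fun u => Ex (extend p u) (fun z => alpha t'.+1 * Fc t'.+1 b0 b1 z * h z))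
  = piw p r T t'.+1 b1 h.
Proof.
move=> Ht.
have al0 := alpha_gt0 t'.+1; have al1 := alpha_lt1 t'.+1.
set al := alpha t'.+1 in al0 al1 *.
set F := Fc t'.+1 b0 b1.
rewrite -piwZ (@piw_ext t' b0 _ (fun z => (1 - al) * F z * h z)); last first.
  by move=> z; field; rewrite addrC natr1 pnatr_eq0.
rewrite !piwE.
apply: (sum_shift
  (A := fun s => tsum s.+1 (fun x => if (s.+1 <= t'.+1)%N then pp x * rx x `^ b0 * ((1 - al) * F x * h x) else 0))
  (B := fun s => tsum s.+1 (fun x => if (s.+1 <= t'.+1)%N then pp x * rx x `^ b0 * Ex (extend p x) (fun z => al * F z * h z) else 0))
  (C := fun s => tsum s.+1 (fun x => if (s.+1 <= t'.+2)%N then pp x * rx x `^ b1 * h x else 0))).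
- by apply: tsum_zero => x; rewrite ltnS leqNgt Ht.
- rewrite !tsum_cons; apply: eq_bigr => y _; rewrite !tsum0 /= pp1.
  rewrite /F FcE /Fden /= /pa /= divr1.
  have r0 : 0 < r [:: y] by apply: r_pos.
  have v0 : 0 < r [:: y] `^ b0 by apply: powR_gt0.
  have -> : r [:: y] `^ b1 = r [:: y] `^ b0 * r [:: y] `^ (b1 - b0).
    by rewrite -powRD ?subrKC //; apply/implyP => _; rewrite gt_eqF.
  rewrite -/al mulr0 add0r mulr1.
  field; rewrite (gt_eqF al1) (gt_eqF v0); reflexivity.
- move=> s Hs; rewrite !(@tsum_rcons s.+1) -tsumD; apply: tsum_ext => x.
  have sx := size_tuple x.
  case: (leqP s.+1 t'.+1) => Hc; last first.
    have c1 : (s.+1 < t'.+1)%N = false by lia.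
    have c2 : (s < t'.+1)%N = false by lia.
    have c3 : (s.+1 < t'.+2)%N = false by lia.
    by rewrite /= c1 c3 addr0.
  have c4 : (s.+1 < t'.+2)%N = true by lia.
  rewrite Ex_extend mulr_sumr -big_split /=; apply: eq_bigr => y _.
  rewrite c4.
  have xn : (1 <= size x <= T.+1)%N by rewrite sx /= ltnW.
  have zn : (1 <= size (rcons x y) <= T.+1)%N by rewrite size_rcons sx.
  have rz := r_pos zn; have rxp := r_pos xn.
  rewrite /F FcE /Fden pa_rcons rx_rcons size_rcons sx pp_rcons.
  rewrite (rx_tuple x).
  have Hu : (r (rcons x y) / r x) `^ b0 * r x `^ b0 = r (rcons x y) `^ b0.
    by rewrite -powRM ?divfK ?gt_eqF // ?divr_ge0 // ltW.
  have Hw : r (rcons x y) `^ b1 = r (rcons x y) `^ b0 * r (rcons x y) `^ (b1 - b0).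
    by rewrite -powRD ?subrKC //; apply/implyP => _; rewrite gt_eqF.
  rewrite Hw -Hu.
  have u0 : 0 < (r (rcons x y) / r x) `^ b0 by apply: powR_gt0; apply: divr_gt0.
  have vx0 : 0 < r x `^ b0 by apply: powR_gt0.
  set u := (r (rcons x y) / r x) `^ b0 in u0 *.
  set vx := r x `^ b0 in vx0 *.
  set w := r (rcons x y) `^ (b1 - b0).
  have D0 : 0 < al * 1 + (1 - al) * u * 1.
    by rewrite !mulr1; apply: ltr_pwDl => //; rewrite mulr_ge0 // ltW.
  rewrite -/al.
  case: ifP => Hc2 /=; rewrite ?Hc2.
    by field; rewrite !mulr1 in D0; rewrite gt_eqF.
  rewrite !mulr0 addr0 mulr1 add0r.
  by field; rewrite gt_eqF.
Qed.


Lemma CP_cheb A (d : nat -> fdist R A) (X : A -> R) c :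
  (forall eps, 0 < eps -> exists C, forall N, (1 <= N)%N ->
     fprob (d N) (fun a => eps < `|X a - c|) <= C / N%:R) ->
  CP d X c.
Proof.
move=> H eps eps0 e e0; have [C HC] := H eps eps0.
have [M HM] := small_eventually C e0.
exists (maxn M 1) => N; rewrite geq_max => /andP[h1 h2].
by apply: le_trans (HC N h2) _; apply: HM.
Qed.

Lemma cont2_absdist (c : R) : cont2 (fun x _ => `|x - c|) c c.
Proof. by move=> e e0; exists e => // x y Hx _; rewrite subrr normr0 subr0 normr_id. Qed.

Lemma CP_absdist A (d : nat -> fdist R A) (G : nat -> A -> Prop) (X : A -> R) c :
  (forall N, (1 <= N)%N -> gd (G N) (d N)) ->
  CP d X c -> CP d (fun a => `|X a - c|) 0.
Proof.
move=> Hd HX; have := CP_op1 Hd (cont2_absdist c) HX.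
by rewrite subrr normr0.
Qed.

Lemma allp_all (P : seq S -> Prop) (Q : pred (seq S)) l :
  (forall z, P z -> Q z) -> allp P l -> all Q l.
Proof. by move=> H; elim: l => [//|z l IH] /= [Pz Pl]; rewrite H // IH. Qed.


Variable next : nat -> pool R S -> R -> R.
Variable betastar : nat -> R.
Variable E : R.
Hypothesis Hnext : forall t N (P : pool R S) b, (t < T)%N -> (1 <= N)%N ->
  size P = (N * t.+1)%N -> goodpool t.+1 P ->
  `|next t P b - betastar t.+1| <= `|b - betastar t| + E / N%:R.

Local Notation D N t := (pbsmc p r alpha next (betastar 0%N) N t).

Definition GoodSt t N (st : pool R S * R) :=
  [/\ size st.1 = (N * t.+1)%N, goodpool t.+1 st.1 &
      `|st.2 - betastar t| <= t%:R * E / N%:R].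

Definition stat (h : seq S -> R) (st : pool R S * R) :=
  (\sum_(zw <- st.1) zw.2 * h zw.1) / (size st.1)%:R.

Lemma estimate_stat (st : pool R S * R) g :
  estimate st.1 g = stat g st / stat (fun _ => 1) st.
Proof.
rewrite /estimate /stat.
have -> : \sum_(zw <- st.1) zw.2 * 1 = \sum_(zw <- st.1) zw.2 by apply: eq_bigr => zw _; rewrite mulr1.
case: (eqVneq (size st.1) 0%N) => H.
  by move/size0nil: H => ->; rewrite !big_nil !mul0r.
by rewrite invf_div mulrA divfK // pnatr_eq0.
Qed.

Definition Inv t :=
  [/\ forall N, (1 <= N)%N -> gd (GoodSt t N) (D N t),
      forall N, (1 <= N)%N -> mass (D N t) = 1 &
      forall g, CP (fun N => D N t) (fun st => estimate st.1 g) (pi_expect p r T t (betastar t) g)].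

Definition L0 (h : seq S -> R) := Ex (extend p [::]) (fun z => rx z `^ betastar 0%N * h z).

Lemma L0E h : L0 h = piw p r T 0 (betastar 0%N) h.
Proof.
rewrite /L0 Ex_extend piwE big_ord_recl /= (piw0_term 0).
by rewrite [X in _ = _ + X]big1 ?addr0 // => s _; apply: tsum_zero.
Qed.

Lemma D0E N : D N 0 = fbind (fiid N (extend p [::])) (fun P0 =>
    fret ([seq (z, rx z `^ betastar 0%N) | z <- P0], betastar 0%N)).
Proof. by []. Qed.

Lemma base_gd N : (1 <= N)%N -> gd (GoodSt 0 N) (D N 0).
Proof.
move=> N1; rewrite D0E; apply: (gd_bind (gd_fiid N (gd_extend [::]))) => l [Hs Hl].
apply: gd_ret; split => /=.
- by rewrite size_map Hs muln1.
- rewrite /goodpool all_map; apply: (allp_all _ Hl) => z /= Hz.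
  rewrite /inr Hz /=; apply: powR_gt0; apply: rx_pos; by rewrite Hz.
- by rewrite subrr normr0 mul0r mul0r.
Qed.

Lemma base_mass N : (1 <= N)%N -> mass (D N 0) = 1.
Proof.
move=> N1; rewrite D0E mass_bind -(mass_fiid N (mass_extend [::])).
by apply: Ex_ext => l; rewrite /mass Ex_ret.
Qed.

Lemma base_stat h : CP (fun N => D N 0) (stat h) (L0 h).
Proof.
apply: CP_cheb => eps eps0.
exists (Ex (extend p [::]) (fun z => (rx z `^ betastar 0%N * h z) ^+ 2) / eps ^+ 2) => N N1.
rewrite D0E fprob_bind.
have N0 : 0 < N%:R :> R by rewrite ltr0n.
apply: le_trans (_ : Ex (fiid N (extend p [::])) (fun l => (N%:R * eps < `|\sum_(z <- l) rx z `^ betastar 0%N * h z - N%:R * L0 h|)%R%:R) <= _).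
  apply: (Ex_ler (gd_fiid N (gd_extend [::]))) => l [Hs _].
  rewrite fprobE Ex_ret /stat /= size_map Hs big_map /=.
  have -> : (\sum_(j <- l) rx j `^ betastar 0%N * h j) / N%:R - L0 h =
     (\sum_(z <- l) rx z `^ betastar 0%N * h z - N%:R * L0 h) / N%:R.
    by field; rewrite gt_eqF.
  rewrite normrM normfV (gtr0_norm N0) ltr_pdivlMr // mulrC.
  by rewrite lexx.
rewrite -fprobE.
apply: le_trans (cheb_fiid _ _ (gd_extend [::]) (mass_extend [::]) _) _.
  by rewrite mulr_gt0.
rewrite exprMn le_eqVlt; apply/orP; left; apply/eqP.
by field; rewrite !gt_eqF.
Qed.

Lemma CP_estimate_ratio A (d : nat -> fdist R A) (X : A -> pool R S * R) g Lg L1 :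
  L1 != 0 -> CP d (fun a => stat g (X a)) Lg -> CP d (fun a => stat (fun _ => 1) (X a)) L1 ->
  (forall N, (1 <= N)%N -> gd (fun _ => True) (d N)) ->
  CP d (fun a => estimate (X a).1 g) (Lg / L1).
Proof.
move=> L10 Hg H1 Hd.
have H := CP_div Hd L10 Hg H1.
by apply: (CP_ext Hd _ H) => N a _ _; rewrite estimate_stat.
Qed.

Lemma base_inv : Inv 0.
Proof.
split; [exact: base_gd | exact: base_mass |] => g.
have H1 : L0 (fun _ => 1) != 0 by rewrite L0E gt_eqF // piw1_pos.
have Hd : forall N, (1 <= N)%N -> gd (fun _ => True) (D N 0).
  by move=> N N1; apply: gd_impl (base_gd N1) _.
have := CP_estimate_ratio (X := id) H1 (base_stat g) (base_stat _) Hd.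
by rewrite /pi_expect !L0E.
Qed.


Lemma stepE N t (a : pool R S * R) : pb_step p r alpha next N t a =
  fbind (fiid N (fbind (resample a.1) (extend p))) (fun B =>
  fbind (fiid (N * t) (resample a.1)) (fun Sel =>
  fret ([seq (z, (1 - alpha t) * Fc t a.2 (next t.-1 a.1 a.2) z / t%:R) | z <- Sel]
        ++ [seq (z, alpha t * Fc t a.2 (next t.-1 a.1 a.2) z) | z <- B], next t.-1 a.1 a.2))).
Proof. by []. Qed.

Lemma DSE N t : D N t.+1 = fbind (D N t) (pb_step p r alpha next N t.+1).
Proof. by []. Qed.

Lemma gd_DB m (P : pool R S) : goodpool m P -> gd (inr m.+1) (fbind (resample P) (extend p)).
Proof.
move=> HP; apply: (gd_bind (gd_resample HP)) => u /andP[u1 um].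
apply: gd_impl (gd_extend u) _ => z Hz; by rewrite /inr Hz /= ltnS um.
Qed.

Lemma goodpool_nil m N (P : pool R S) : (1 <= N)%N -> size P = (N * m.+1)%N -> P != [::].
Proof. by move=> N1 Hs; apply/eqP => HP; move: Hs; rewrite HP /=; move/esym/eqP; rewrite muln_eq0; case: N N1. Qed.

Lemma mass_DB m (P : pool R S) : goodpool m P -> P != [::] -> mass (fbind (resample P) (extend p)) = 1.
Proof.
move=> HP HP0; rewrite mass_bind -(mass_resample HP HP0); apply: Ex_ext => u; exact: mass_extend.
Qed.

Lemma step_gd t' N a : (t' < T)%N -> (1 <= N)%N -> GoodSt t' N a ->
  gd (GoodSt t'.+1 N) (pb_step p r alpha next N t'.+1 a).
Proof.
case: a => P b Ht N1 [/= Hs Hg Hb]; rewrite stepE /=.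
apply: (gd_bind (gd_fiid N (gd_DB Hg))) => B [HBs HB].
apply: (gd_bind (gd_fiid (N * t'.+1) (gd_resample Hg))) => Sel [HSs HSel].
apply: gd_ret; split => /=.
- by rewrite size_cat !size_map HSs HBs [in RHS]mulnS addnC.
- rewrite goodpool_cat /goodpool !all_map; apply/andP; split.
    apply: (allp_all _ HSel) => z /= Hz; apply/andP; split.
      by move: Hz; rewrite /inr => /andP[-> /= h]; apply: leq_trans h _.
    apply: mulr_gt0; last by rewrite invr_gt0 ltr0n.
    apply: mulr_gt0; first exact: alpha_lt1.
    apply: Fc_pos => //; move: Hz; rewrite /inr => /andP[-> /= h]; apply: leq_trans h _; exact: ltnW.
  apply: (allp_all _ HB) => z /= Hz; rewrite Hz /=.
  apply: mulr_gt0; first exact: alpha_gt0.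
  by apply: Fc_pos => //; move: Hz; rewrite /inr => /andP[-> /= h]; apply: leq_trans h _.
- apply: le_trans (Hnext _ Ht N1 Hs Hg) _.
  rewrite -natr1 !mulrDl mul1r; apply: lerD => //.
Qed.

Lemma step_mass t' N a : (1 <= N)%N -> GoodSt t' N a ->
  mass (pb_step p r alpha next N t'.+1 a) = 1.
Proof.
case: a => P b N1 [/= Hs Hg Hb]; rewrite stepE /=.
have HP0 := goodpool_nil N1 Hs.
rewrite mass_bind -(mass_fiid N (mass_DB Hg HP0)); apply: Ex_ext => B.
rewrite mass_bind -(mass_fiid (N * t'.+1) (mass_resample Hg HP0)); apply: Ex_ext => Sel.
by rewrite /mass Ex_ret.
Qed.

Section Step.
Variable t' : nat.
Hypothesis Ht : (t' < T)%N.
Hypothesis IH : Inv t'.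

Let Dt := fun N => D N t'.
Let bn (a : pool R S * R) := next t' a.1 a.2.

Lemma IHgd : forall N, (1 <= N)%N -> gd (GoodSt t' N) (Dt N).
Proof. by case: IH. Qed.

Lemma CP_b : CP Dt (fun a => a.2) (betastar t').
Proof.
apply: (CP_near IHgd) => eps eps0.
have [M HM] := small_eventually (t'%:R * E) eps0.
by exists M => N a HN N1 [_ _ Hb]; apply: le_trans Hb (HM N HN N1).
Qed.

Lemma CP_bn : CP Dt bn (betastar t'.+1).
Proof.
apply: (CP_near IHgd) => eps eps0.
have [M HM] := small_eventually (t'.+1%:R * E) eps0.
exists M => N [P b] HN N1 [/= Hs Hg Hb]; apply: le_trans (Hnext _ Ht N1 Hs Hg) _.
apply: le_trans (HM N HN N1).
by rewrite -natr1 !mulrDl mul1r; apply: lerD.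
Qed.

Lemma CP_Fc z : (1 <= size z <= T.+1)%N ->
  CP Dt (fun a => Fc t'.+1 a.2 (bn a) z) (Fc t'.+1 (betastar t') (betastar t'.+1) z).
Proof.
move=> Hz; have /andP[z1 zT] := Hz.
have rho0 : 0 < rx z / rx (pa z).
  by apply: divr_gt0; [apply: rx_pos | apply: rxpa_pos; apply: leq_trans zT _].
have Hnum := CP_mul IHgd (CP_powR IHgd rho0 CP_b) (CP_powR IHgd (rx_pos zT) (CP_sub IHgd CP_bn CP_b)).
have Hden := CP_add IHgd (CP_cst IHgd (alpha t'.+1 * (if (2 <= size z)%N then 1 else 0)))
   (CP_mul IHgd (CP_scale IHgd (1 - alpha t'.+1) (CP_powR IHgd rho0 CP_b))
       (CP_cst IHgd (if (size z <= t'.+1)%N then 1 else 0))).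
have Hd0 := Fden_pos (betastar t') (ltn0Sn t') z1.
have H := CP_div IHgd (lt0r_neq0 Hd0) Hnum Hden.
by apply: (CP_ext IHgd _ H) => N a _ _; rewrite FcE /Fden.
Qed.

Lemma CP_sum0 (I : Type) (sq : seq I) (X : I -> pool R S * R -> R) :
  (forall i, CP Dt (X i) 0) -> CP Dt (fun a => \sum_(i <- sq) X i a) 0.
Proof. by move=> H; have := CP_sum IHgd sq H; rewrite big1_eq. Qed.

Lemma CP_MS (psi : R -> R -> seq S -> R) :
  (forall z, inr t'.+1 z -> CP Dt (fun a => psi a.2 (bn a) z) (psi (betastar t') (betastar t'.+1) z)) ->
  CP Dt (fun a => Ex (resample a.1) (psi a.2 (bn a)))
        (pi_expect p r T t' (betastar t') (psi (betastar t') (betastar t'.+1))).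
Proof.
move=> Hpsi.
set ps := psi (betastar t') (betastar t'.+1).
have HX : CP Dt (fun a => estimate a.1 ps) (pi_expect p r T t' (betastar t') ps) by case: IH.
have HZ : CP Dt (fun a => BS t'.+1 (fun z => psi a.2 (bn a) z - ps z)) 0.
  rewrite /BS; apply: CP_sum0 => s; apply: CP_sum0 => x.
  apply: (CP_absdist IHgd); apply: Hpsi.
  by rewrite /inr size_tuple /= ltn_ord.
apply: (CP_approx IHgd HX HZ) => N a N1 [Hs Hg _].
rewrite Ex_resample.
have -> : estimate a.1 (psi a.2 (bn a)) - estimate a.1 ps =
    estimate a.1 (fun z => psi a.2 (bn a) z - ps z).
  by rewrite -!Ex_resample ExB.
exact: est_le_BS Hg (goodpool_nil N1 Hs).
Qed.

Lemma CP_MB (psi : R -> R -> seq S -> R) :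
  (forall z, inr t'.+2 z -> CP Dt (fun a => psi a.2 (bn a) z) (psi (betastar t') (betastar t'.+1) z)) ->
  CP Dt (fun a => Ex (fbind (resample a.1) (extend p)) (psi a.2 (bn a)))
        (pi_expect p r T t' (betastar t') (fun u => Ex (extend p u) (psi (betastar t') (betastar t'.+1)))).
Proof.
move=> Hpsi.
have H := CP_MS (psi := fun b b' u => Ex (extend p u) (psi b b')).
apply: (CP_ext IHgd _ (H _)) => [N a _ _|z Hz]; first by rewrite Ex_bind.
have H2 : CP Dt (fun a => \sum_(x : S) p z x * psi a.2 (bn a) (rcons z x))
   (\sum_(x : S) p z x * psi (betastar t') (betastar t'.+1) (rcons z x)).
  apply: (CP_sum IHgd) => x; apply: (CP_scale IHgd); apply: Hpsi.
  by move: Hz => /andP[_ h]; rewrite /inr size_rcons /=; lia.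
by rewrite Ex_extend; apply: (CP_ext IHgd _ H2) => N a _ _; rewrite Ex_extend.
Qed.

Definition phiS (h : seq S -> R) b b' z := (1 - alpha t'.+1) * Fc t'.+1 b b' z / t'.+1%:R * h z.
Definition phiB (h : seq S -> R) b b' z := alpha t'.+1 * Fc t'.+1 b b' z * h z.
Definition Gf (h : seq S -> R) (a : pool R S * R) :=
  (t'.+1%:R * Ex (resample a.1) (phiS h a.2 (bn a))
     + Ex (fbind (resample a.1) (extend p)) (phiB h a.2 (bn a))) / t'.+2%:R.
Definition Cf (h : seq S -> R) (eps : R) (a : pool R S * R) :=
  4 * (t'.+1%:R * Ex (resample a.1) (fun z => phiS h a.2 (bn a) z ^+ 2)
     + Ex (fbind (resample a.1) (extend p)) (fun z => phiB h a.2 (bn a) z ^+ 2))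
  / (t'.+2%:R ^+ 2 * eps ^+ 2).

Lemma cheb_step h eps N a : 0 < eps -> (1 <= N)%N -> GoodSt t' N a ->
  fprob (pb_step p r alpha next N t'.+1 a) (fun y => eps < `|stat h y - Gf h a|)
    <= Cf h eps a / N%:R.
Proof.
case: a => P b eps0 N1 [/= Hs Hg Hb].
have HP0 := goodpool_nil N1 Hs.
rewrite stepE /=.
rewrite /Gf /Cf /bn /=.
set b' := next t' P b.
set fS := phiS h b b'.
set fB := phiB h b b'.
set DS := resample P.
set DB := fbind DS (extend p).
have mS : mass DS = 1 := mass_resample Hg HP0.
have mB : mass DB = 1 := mass_DB Hg HP0.
have gS := gd_resample Hg.
have gB := gd_DB Hg.
have N0 : 0 < N%:R :> R by rewrite ltr0n.
have t0 : 0 < t'.+2%:R :> R by rewrite ltr0n.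
set del := N%:R * t'.+2%:R * eps / 2.
have del0 : 0 < del by rewrite /del !mulr_gt0 // invr_gt0 ltr0n.
set i1 := fun Sel : seq (seq S) =>
  ((del < `|\sum_(z <- Sel) fS z - (N * t'.+1)%:R * Ex DS fS|)%R)%:R : R.
set i2 := fun B : seq (seq S) =>
  ((del < `|\sum_(z <- B) fB z - N%:R * Ex DB fB|)%R)%:R : R.
rewrite fprob_bind.
have Hpt : forall B, size B = N /\ allp (inr t'.+2) B ->
  fprob (fbind (fiid (N * t'.+1) DS) (fun Sel =>
      fret ([seq (z, (1 - alpha t'.+1) * Fc t'.+1 b b' z / t'.+1%:R) | z <- Sel]
         ++ [seq (z, alpha t'.+1 * Fc t'.+1 b b' z) | z <- B], b')))
    (fun y => eps < `|stat h y - (t'.+1%:R * Ex DS fS + Ex DB fB) / t'.+2%:R|)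
  <= Ex (fiid (N * t'.+1) DS) i1 + i2 B.
  move=> B [HBs _].
  have -> : Ex (fiid (N * t'.+1) DS) i1 + i2 B = Ex (fiid (N * t'.+1) DS) (fun Sel => i1 Sel + i2 B).
    by rewrite ExD Ex_cst mass_fiid // mulr1.
  rewrite fprob_bind; apply: (Ex_ler (gd_fiid _ gS)) => Sel [HSs _].
  rewrite fprobE Ex_ret /stat /= big_cat !big_map size_cat !size_map HSs HBs /=.
  set X1 := \sum_(z <- Sel) fS z - (N * t'.+1)%:R * Ex DS fS.
  set X2 := \sum_(z <- B) fB z - N%:R * Ex DB fB.
  have Heq : (\sum_(j <- Sel) (1 - alpha t'.+1) * Fc t'.+1 b b' j / t'.+1%:R * h j +
      \sum_(j <- B) alpha t'.+1 * Fc t'.+1 b b' j * h j) / (N * t'.+1 + N)%:R -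
      (t'.+1%:R * Ex DS fS + Ex DB fB) / t'.+2%:R = (X1 + X2) / (N%:R * t'.+2%:R).
    have HNt : (N * t'.+1 + N)%:R = N%:R * t'.+2%:R :> R by rewrite -natrM [in RHS]mulnS addnC.
    rewrite HNt /X1 /X2 /fS /fB /phiS /phiB natrM.
    by field; rewrite !gt_eqF.
  rewrite Heq /i1 /i2 -/X1 -/X2.
  have I1 : forall c : bool, (c%:R : R) <= 1 by case; rewrite ?ler01 ?lexx.
  have I0 : forall c : bool, 0 <= (c%:R : R) by case; rewrite ?ler01 ?lexx.
  case: (ltrP del `|X1|) => h1.
    by apply: le_trans (I1 _) _; rewrite /= lerDl.
  case: (ltrP del `|X2|) => h2.
    by apply: le_trans (I1 _) _; rewrite /= add0r.
  rewrite /= addr0 ltNge.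
  have -> : (`|(X1 + X2) / (N%:R * t'.+2%:R)| <= eps) = true; last by [].
  apply/idP; rewrite normrM normfV (gtr0_norm (mulr_gt0 N0 t0)) ler_pdivrMr ?mulr_gt0 //.
  apply: le_trans (ler_normD _ _) _.
  have -> : eps * (N%:R * t'.+2%:R) = del + del by rewrite /del; field.
  exact: lerD.
apply: le_trans (Ex_ler (gd_fiid N gB) Hpt) _.
rewrite ExD Ex_cst mass_fiid // mulr1.
have H1 : Ex (fiid (N * t'.+1) DS) i1 <= (N * t'.+1)%:R * Ex DS (fun x => fS x ^+ 2) / del ^+ 2.
  by rewrite /i1 -fprobE; apply: (cheb_fiid fS (N * t'.+1) gS mS del0).
have H2 : Ex (fiid N DB) i2 <= N%:R * Ex DB (fun x => fB x ^+ 2) / del ^+ 2.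
  by rewrite /i2 -fprobE; apply: (cheb_fiid fB N gB mB del0).
apply: le_trans (lerD H1 H2) _.
rewrite le_eqVlt; apply/orP; left; apply/eqP.
rewrite /del natrM; field; rewrite ?gt_eqF //.
Qed.

Lemma inr2T z : inr t'.+2 z -> (1 <= size z <= T.+1)%N.
Proof. by rewrite /inr; move: Ht; lia. Qed.

Lemma CP_phiS h z : inr t'.+2 z ->
  CP Dt (fun a => phiS h a.2 (bn a) z) (phiS h (betastar t') (betastar t'.+1) z).
Proof.
move=> Hz; exact: (CP_mul IHgd (CP_mul IHgd (CP_scale IHgd _ (CP_Fc (inr2T Hz))) (CP_cst IHgd _)) (CP_cst IHgd _)).
Qed.

Lemma CP_phiB h z : inr t'.+2 z ->
  CP Dt (fun a => phiB h a.2 (bn a) z) (phiB h (betastar t') (betastar t'.+1) z).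
Proof.
move=> Hz; exact: (CP_mul IHgd (CP_scale IHgd _ (CP_Fc (inr2T Hz))) (CP_cst IHgd _)).
Qed.

Lemma CP_sq (X : pool R S * R -> R) c : CP Dt X c -> CP Dt (fun a => X a ^+ 2) (c ^+ 2).
Proof.
move=> H; have H2 := CP_mul IHgd H H; rewrite -expr2 in H2.
by apply: (CP_ext IHgd _ H2) => N a _ _; rewrite expr2.
Qed.

Lemma inr12 z : inr t'.+1 z -> inr t'.+2 z.
Proof. by rewrite /inr; lia. Qed.

Definition Lt (h : seq S -> R) :=
  (t'.+1%:R * pi_expect p r T t' (betastar t') (phiS h (betastar t') (betastar t'.+1))
   + pi_expect p r T t' (betastar t') (fun u => Ex (extend p u) (phiB h (betastar t') (betastar t'.+1))))
  / t'.+2%:R.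

Lemma CP_Gf h : CP Dt (Gf h) (Lt h).
Proof.
have HS := CP_MS (psi := phiS h) (fun z Hz => CP_phiS h (inr12 Hz)).
have HB := CP_MB (psi := phiB h) (fun z Hz => CP_phiB h Hz).
exact: (CP_mul IHgd (CP_add IHgd (CP_scale IHgd _ HS) HB) (CP_cst IHgd _)).
Qed.

Lemma CP_Cf h eps : exists Cs, CP Dt (Cf h eps) Cs.
Proof.
have HS := CP_MS (psi := fun b b' z => phiS h b b' z ^+ 2) (fun z Hz => CP_sq (CP_phiS h (inr12 Hz))).
have HB := CP_MB (psi := fun b b' z => phiB h b b' z ^+ 2) (fun z Hz => CP_sq (CP_phiB h Hz)).
eexists; exact: (CP_mul IHgd (CP_scale IHgd _ (CP_add IHgd (CP_scale IHgd _ HS) HB)) (CP_cst IHgd _)).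
Qed.

Lemma Ex_ext_gd A (P : A -> Prop) (d : fdist R A) (X Y : A -> R) :
  gd P d -> (forall a, P a -> X a = Y a) -> Ex d X = Ex d Y.
Proof.
move=> Hd H; apply/eqP; rewrite eq_le; apply/andP; split; apply: (Ex_ler Hd) => a Pa; by rewrite H.
Qed.

Lemma step_stat h : CP (fun N => D N t'.+1) (stat h) (Lt h).
Proof.
have Hm : forall N, (1 <= N)%N -> mass (Dt N) = 1 by case: IH.
apply: (CP_bind (G := GoodSt t') IHgd Hm _ (CP_Gf h)).
  move=> N a N1 Ga; split; last exact: step_mass N1 Ga.
  by apply: gd_impl (step_gd Ht N1 Ga) _.
move=> eps eps0; have [Cs HCs] := CP_Cf h eps.
exists (Cf h eps), Cs; split => // N a N1 Ga.
exact: cheb_step.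
Qed.

Lemma Lt_eq h : Lt h = piw p r T t'.+1 (betastar t'.+1) h /
   (piw p r T t' (betastar t') (fun _ => 1) * t'.+2%:R).
Proof.
rewrite -(step_identity (betastar t') (betastar t'.+1) h Ht) /Lt /pi_expect /phiS /phiB /=.
have := piw1_pos t' (betastar t'); set Z := piw _ _ _ _ _ _ => Z0.
field; apply/andP; split; last exact: lt0r_neq0 Z0.
apply: lt0r_neq0; have := ler0n R t'; lra.
Qed.

Lemma step_inv : Inv t'.+1.
Proof.
have Hgd : forall N, (1 <= N)%N -> gd (GoodSt t'.+1 N) (D N t'.+1).
  move=> N N1; rewrite DSE; apply: (gd_bind (IHgd N1)) => a Ga; exact: step_gd.
split => //.
  move=> N N1; rewrite DSE mass_bind.
  have Hm : mass (Dt N) = 1 by case: IH => _ H _; apply: H.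
  rewrite -Hm; apply: (Ex_ext_gd (IHgd N1)) => a Ga; exact: step_mass.
move=> g.
have Hd : forall N, (1 <= N)%N -> gd (fun _ => True) (D N t'.+1).
  by move=> N N1; apply: gd_impl (Hgd N N1) _.
have L10 : Lt (fun _ => 1) != 0.
  rewrite Lt_eq; apply: lt0r_neq0; apply: divr_gt0; first exact: piw1_pos.
  apply: mulr_gt0; first exact: piw1_pos.
  by rewrite ltr0n.
have := CP_estimate_ratio (X := id) L10 (step_stat g) (step_stat _) Hd.
rewrite !Lt_eq /pi_expect.
have := piw1_pos t' (betastar t'); set Z := piw _ _ _ t' _ _ => Z0.
have := piw1_pos t'.+1 (betastar t'.+1); set Z1 := piw _ _ _ t'.+1 _ (fun _ => 1) => Z10.
have -> : piw p r T t'.+1 (betastar t'.+1) g / (Z * t'.+2%:R) / (Z1 / (Z * t'.+2%:R)) =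
  piw p r T t'.+1 (betastar t'.+1) g / Z1.
  by field; rewrite !gt_eqF // ltr0n.
done.
Qed.

End Step.

Lemma sum_r_ge (P : pool R S) : all (fun zw => inr T.+1 zw.1) P ->
  (size P)%:R * Rmin <= \sum_(zw <- P) r zw.1.
Proof.
elim: P => [|zw P IH] /=; first by rewrite big_nil mul0r.
case/andP => Hz HP; rewrite big_cons -addn1 natrD mulrDl mul1r addrC.
by apply: lerD; [case/andP: (r_bnd Hz) | apply: IH].
Qed.

Lemma adaptive_ok gamma beta0 t N (P : pool R S) b : 0 < gamma ->
  (t < T)%N -> (1 <= N)%N -> size P = (N * t.+1)%N -> goodpool t.+1 P ->
  `|adaptive_next r gamma t P b - (beta0 + t.+1%:R * gamma)|
    <= `|b - (beta0 + t%:R * gamma)| + gamma * (1 + Rmax / Rmin) / N%:R.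
Proof.
move=> g0 Ht N1 Hs Hg.
have HP0 := goodpool_nil N1 Hs.
have HT : all (fun zw => inr T.+1 zw.1) P.
  apply: sub_all Hg => zw /andP[h _]; move: h; rewrite /inr /=; move: Ht; lia.
have HC : (N <= size P)%N by rewrite Hs leq_pmulr.
have C0 : 0 < (size P)%:R :> R by rewrite ltr0n; apply: leq_trans HC.
have N0 : 0 < N%:R :> R by rewrite ltr0n.
rewrite /adaptive_next.
set tot := \sum_(zw <- P) r zw.1.
set sigma := \sum_(zw <- P) (r zw.1 / tot) ^+ 2.
have Htot : (size P)%:R * Rmin <= tot by apply: sum_r_ge.
have tot0 : 0 < tot by apply: lt_le_trans Htot; rewrite mulr_gt0.
have Hmem : forall zw, zw \in P -> Rmin <= r zw.1 <= Rmax.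
  by move=> zw Hzw; apply: r_bnd; move/allP: HT => /(_ zw Hzw).
have Rmax0 : 0 <= Rmax.
  case: P HP0 Hmem {HT HC C0 Hs Hg Htot tot0 tot sigma} => [//|zw P] _ H.
  have /andP[h1 h2] := H zw (mem_head _ _); apply: le_trans h2; apply: le_trans h1; exact: ltW.
have sig0 : 0 <= sigma by apply: sumr_ge0 => zw _; apply: sqr_ge0.
have sig1 : sigma <= Rmax / tot.
  apply: le_trans (_ : \sum_(zw <- P) (r zw.1 / tot) * (Rmax / tot) <= _).
    rewrite [X in X <= _]big_seq [X in _ <= X]big_seq; apply: ler_sum => zw Hzw.
    have /andP[h1 h2] := Hmem zw Hzw.
    rewrite expr2; apply: ler_wpM2l; first by apply: divr_ge0; [apply: le_trans h1; apply: ltW|apply: ltW].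
    by rewrite ler_pM2r ?invr_gt0.
  rewrite -mulr_suml -mulr_suml /tot; rewrite -/tot divff ?mul1r //; exact: lt0r_neq0.
have sig2 : sigma <= Rmax / Rmin / N%:R.
  apply: le_trans sig1 _; rewrite -mulrA -invfM; apply: ler_wpM2l => //.
  rewrite lef_pV2 ?posrE ?mulr_gt0 //.
  apply: le_trans Htot; rewrite mulrC ler_pM2r //.
  by rewrite ler_nat.
have iC : 1 / (size P)%:R <= 1 / N%:R :> R.
  by rewrite ler_pM2l ?ltr01 // lef_pV2 ?posrE // ler_nat.
have iC0 : 0 <= 1 / (size P)%:R :> R by rewrite divr_ge0 // ltW.
have -> : b + gamma * (1 - (sigma - 1 / (size P)%:R)) - (beta0 + t.+1%:R * gamma) =
   (b - (beta0 + t%:R * gamma)) + gamma * (1 / (size P)%:R - sigma).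
  by rewrite -natr1; ring.
apply: le_trans (ler_normD _ _) _; apply: lerD => //.
rewrite normrM (gtr0_norm g0) -mulrA; apply: ler_wpM2l; first exact: ltW.
apply: le_trans (ler_normB _ _) _.
rewrite (ger0_norm iC0) (ger0_norm sig0) mulrDl.
by apply: lerD.
Qed.

Lemma all_inv t : (t <= T)%N -> Inv t.
Proof.
elim: t => [|t IHt] Ht; first exact: base_inv.
by apply: step_inv => //; apply: IHt; apply: ltnW.
Qed.

Lemma CP_conv A (d : nat -> fdist R A) (G : nat -> A -> Prop) (X : A -> R) c :
  (forall N, (1 <= N)%N -> gd (G N) (d N)) -> CP d X c -> conv_prob d X c.
Proof.
move=> Hd H eps eps0; apply/cvgrPdist_lt => e e0.
have e20 : 0 < e / 2 by rewrite divr_gt0.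
have [M HM] := H eps eps0 _ e20.
exists (maxn M 1) => // N /=; rewrite geq_max => /andP[h1 h2].
rewrite sub0r normrN ger0_norm; last exact: (fprob_ge0 _ (Hd N h2)).
apply: le_lt_trans (HM N h1) _.
by rewrite ltr_pdivrMr // ltr_pMr // ltr1n.
Qed.

Lemma main_conv t : (t <= T)%N -> forall g,
  conv_prob (fun N => D N t) (fun st => estimate st.1 g) (pi_expect p r T t (betastar t) g).
Proof. by move=> Ht g; case: (all_inv Ht) => Hgd _ Hc; apply: (CP_conv Hgd (Hc g)). Qed.

Lemma main_beta t : (t <= T)%N ->
  conv_prob (fun N => D N t) (fun st => st.2) (betastar t).
Proof.
move=> Ht; case: (all_inv Ht) => Hgd _ _; apply: (CP_conv Hgd).
apply: (CP_near Hgd) => eps eps0.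
have [M HM] := small_eventually (t%:R * E) eps0.
by exists M => N a HN N1 [_ _ Hb]; apply: le_trans Hb (HM N HN N1).
Qed.

End Model.

Theorem theorem1 (R : realType) (S : finType) (T : nat)
    (p : seq S -> S -> R) (r : seq S -> R) (Rmin Rmax : R) (alpha : nat -> R)
    (p_ge0 : forall (u : seq S) (x : S), 0 <= p u x)
    (p_norm : forall u : seq S, \sum_(x : S) p u x = 1)
    (Rmin_gt0 : 0 < Rmin)
    (r_bnd : forall z : seq S, (1 <= size z <= T.+1)%N -> Rmin <= r z <= Rmax)
    (alpha_bnd : forall t : nat, 0 < alpha t < 1) :
  (* fixed powers *)
  (forall betas : nat -> R, (forall t, (t <= T)%N -> 0 <= betas t) ->
    forall t : nat, (t <= T)%N -> forall f : seq S -> R,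
      conv_prob (fun N => pbsmc p r alpha (@fixed_next R S betas) (betas 0%N) N t)
                (fun st => estimate st.1 f)
                (pi_expect p r T t (betas t) f))
  /\
  (* adaptive powers *)
  (forall (gamma beta0 : R), 0 < gamma -> 0 <= beta0 ->
    exists betastar : nat -> R,
      forall t : nat, (t <= T)%N ->
        conv_prob (fun N => pbsmc p r alpha (adaptive_next r gamma) beta0 N t)
                  (fun st => st.2) (betastar t)
        /\
        forall f : seq S -> R,
          conv_prob (fun N => pbsmc p r alpha (adaptive_next r gamma) beta0 N t)
                    (fun st => estimate st.1 f)
                    (pi_expect p r T t (betastar t) f)).
Proof.
split.
- move=> betas _ t Ht f.
  have Hn : forall t0 N (P : pool R S) b, (t0 < T)%N -> (0 < N)%N ->
      size P = (N * t0.+1)%N -> goodpool t0.+1 P ->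
      `|fixed_next betas t0 P b - betas t0.+1| <= `|b - betas t0| + 0 / N%:R.
    by move=> *; rewrite /fixed_next subrr normr0 mul0r addr0 normr_ge0.
  exact: (main_conv p_ge0 p_norm Rmin_gt0 r_bnd alpha_bnd Hn Ht f).
- move=> gamma beta0 g0 _.
  pose bs := fun t : nat => if t is t'.+1 then beta0 + t%:R * gamma else beta0.
  have bsE : forall t, bs t = beta0 + t%:R * gamma by case => [|t] //=; rewrite mul0r addr0.
  have Hn : forall t0 N (P : pool R S) b, (t0 < T)%N -> (0 < N)%N ->
      size P = (N * t0.+1)%N -> goodpool t0.+1 P ->
      `|adaptive_next r gamma t0 P b - bs t0.+1| <= `|b - bs t0| + gamma * (1 + Rmax / Rmin) / N%:R.
    move=> t0 N P b H1 H2 H3 H4; rewrite !bsE.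
    exact: (adaptive_ok Rmin_gt0 r_bnd beta0 b g0 H1 H2 H3 H4).
  exists bs => t Ht; split.
    exact: (main_beta p_ge0 p_norm Rmin_gt0 r_bnd alpha_bnd Hn Ht).
  move=> f; exact: (main_conv p_ge0 p_norm Rmin_gt0 r_bnd alpha_bnd Hn Ht f).
Qed.
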